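(* Let $p,q$ be positive integers with $p\ge 2q$. The graph $K_{p/q}$ admits an orientation without alternating odd cycles if and only if $p/q\le 3$.
   Context: The rational complete graph $K_{p/q}$ has vertex set $\{0,1,\dots,p-1\}$, with $a,b$ adjacent iff $q\le|a-b|\le p-q$. An orientation assigns each edge exactly one direction. In an oriented graph, a subgraph that is a cycle is called alternating if at most one of its vertices has both positive in-degree and positive out-degree within that cycle; an alternating odd cycle is an alternating cycle of odd length. *)

(* Defs.v *)
From mathcomp Require Import all_boot.
Unset Printing Implicit Defensive.

Definition ndist (a b : nat) : nat := (a - b) + (b - a).

Definition Kpq_adj (p q : nat) : rel 'I_p :=
  fun a b => (q <= ndist a b) && (ndist a b <= p - q).

Definition is_orientation (p q : nat) (o : rel 'I_p) : Prop :=
  (forall a b, o a b -> Kpq_adj p q a b) /\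
  (forall a b, Kpq_adj p q a b -> o a b != o b a).

Definition is_cycle (p q : nat) (s : seq 'I_p) : Prop :=
  [/\ uniq s, 3 <= size s & cycle (Kpq_adj p q) s].

(* vertex x of cycle s has both positive in-degree and out-degree within s *)
Definition mixed_in (p : nat) (o : rel 'I_p) (s : seq 'I_p) (x : 'I_p) : bool :=
  (o (prev s x) x && o x (next s x)) || (o (next s x) x && o x (prev s x)).

Definition alternating (p : nat) (o : rel 'I_p) (s : seq 'I_p) : Prop :=
  count (mixed_in p o s) s <= 1.

Definition alternating_odd_cycle (p q : nat) (o : rel 'I_p) (s : seq 'I_p) : Prop :=
  [/\ is_cycle p q s, odd (size s) & alternating p o s].

(* Main.v *)
Require Import Defs.
From mathcomp Require Import all_boot.
From mathcomp Require Import zify.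

Lemma nextA (T:eqType) (s: seq T) x0 i : uniq s -> i.+1 < size s ->
  next s (nth x0 s i) = nth x0 s i.+1.
Proof.
move=> U lt; rewrite next_nth mem_nth ?(ltnW lt) //.
case: s U lt => [|y s'] // U lt.
rewrite (index_uniq x0) ?(ltnW lt) //.
by apply: set_nth_default.
Qed.

Lemma nextB (T:eqType) (s: seq T) x0 : uniq s -> 0 < size s ->
  next s (nth x0 s (size s).-1) = nth x0 s 0.
Proof.
move=> U lt; rewrite next_nth mem_nth ?prednK //.
case: s U lt => [|y s'] // U _.
by rewrite (index_uniq x0) //= nth_default.
Qed.

Lemma core (T:eqType) (s: seq T) x0 (f : T -> nat) :
 odd (size s) -> 1 < size s ->
 (forall i, i.+2 < size s -> f (nth x0 s i) = f (nth x0 s i.+2)) ->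
 f (nth x0 s (size s).-1) = f (nth x0 s 1) ->
 f (nth x0 s 0) = f (nth x0 s 1).
Proof.
move=> od s1 H Hl.
have E: forall j, j.*2 < size s -> f (nth x0 s j.*2) = f (nth x0 s 0).
  elim=> [//|j IH] lt; rewrite doubleS -(H j.*2) ?IH //; lia.
have O: forall j, j.*2.+1 < (size s).-1 -> f (nth x0 s j.*2.+1) = f (nth x0 s 1).
  elim=> [//|j IH] lt; rewrite doubleS -(H j.*2.+1) ?IH //; lia.
have [h eh]: exists h, size s = h.*2.+1.
  exists (size s)./2; rewrite -[LHS](odd_double_half (size s)) od; lia.
rewrite -(E h); last lia.
rewrite -[in RHS]Hl eh /=; done.
Qed.

Lemma key (T:eqType) (s: seq T) (f : T -> nat) (P : pred T) :
  uniq s -> odd (size s) -> 1 < size s -> count P s <= 1 ->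
  (forall x, x \in s -> ~~ P x -> f (prev s x) = f (next s x)) ->
  (forall x, x \in s -> f x != f (next s x)) -> False.
Proof.
move=> U od s1 cP Hp Hn.
have [x xs Hx]: exists2 x, x \in s & forall y, y \in s -> y != x -> ~~ P y.
  case: (boolP (has P s)) => [/hasP [x xs Px]|/hasPn hP].
    exists x => // y ys yx; apply/negP => Py.
    move: cP; rewrite ((permP (perm_to_rem xs)) P) /= Px.
    have : 0 < count P (rem x s).
      rewrite -has_count; apply/hasP; exists y => //.
      by rewrite (mem_rem_uniq _ U) inE yx ys.
    lia.
  case: s U od s1 cP Hp Hn hP => [|z s'] // U od s1 cP Hp Hn hP.
  by exists z; [rewrite inE eqxx | move=> y ys _; apply: (hP y)].
case: (rot_to xs) => i s' ei.
set s2 := rcons s' x.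
have e2 : s2 = rot 1 (rot i s) by rewrite ei rot1_cons.
have U2 : uniq s2 by rewrite e2 !rot_uniq.
have sz2 : size s2 = size s by rewrite e2 !size_rot.
have m2 : s2 =i s by move=> y; rewrite e2 !mem_rot.
have nx2 : next s2 =1 next s by move=> y; rewrite e2 (next_rot 1) ?rot_uniq // next_rot.
have pv2 : prev s2 =1 prev s by move=> y; rewrite e2 (prev_rot 1) ?rot_uniq // prev_rot.
have xs' : x \notin s' by move: U2; rewrite rcons_uniq => /andP[].
have inner : forall k, k.+1 < size s -> nth x s2 k \in s /\ nth x s2 k != x.
  move=> k lk.
  have lk' : k < size s' by move: lk; rewrite -sz2 size_rcons.
  rewrite -m2 mem_nth ?sz2 ?(ltnW lk) //; split=> //.
  rewrite nth_rcons lk'; apply/negP=> /eqP ex.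
  by move: xs'; rewrite -ex mem_nth.
have pA : forall k, k.+1 < size s -> prev s2 (nth x s2 k.+1) = nth x s2 k.
  by move=> k lk; rewrite -nextA ?sz2 // prev_next.
suff: f (nth x s2 0) = f (nth x s2 1).
  have [i0 ni0] := inner 0 s1.
  by move/eqP: (Hn _ i0); rewrite -nx2 nextA ?sz2.
apply: (@core _ s2 x f); rewrite ?sz2 //.
  move=> k lk; have [ik nik] := inner k.+1 lk.
  have := Hp _ ik (Hx _ ik nik); rewrite -pv2 -nx2 pA ?(ltnW lk) // nextA ?sz2 //.
have [i0 ni0] := inner 0 s1.
have := Hp _ i0 (Hx _ i0 ni0); rewrite -pv2 -nx2 nextA ?sz2 //.
move=> <-; congr f.
rewrite -sz2 -(@nextB _ s2 x U2); last by rewrite sz2; lia.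
by rewrite (prev_next U2).
Qed.

Lemma adj_sym p q (a b : 'I_p) : Kpq_adj p q a b = Kpq_adj p q b a.
Proof. by rewrite /Kpq_adj /ndist addnC. Qed.

Lemma col3 u v w : u<3 -> v<3 -> w<3 -> u != v -> v != w ->
  ~~ ((u.+1 %% 3 == v) && (v.+1 %% 3 == w)) ->
  ~~ ((w.+1 %% 3 == v) && (v.+1 %% 3 == u)) -> u = w.
Proof. by case: u => [|[|[|u]]] //; case: v => [|[|[|v]]] //; case: w => [|[|[|w]]]. Qed.

Lemma col2 u v : u<3 -> v<3 -> u != v -> (u.+1 %% 3 == v) != (v.+1 %% 3 == u).
Proof. by case: u => [|[|[|u]]] //; case: v => [|[|[|v]]]. Qed.

Section Good.
Variables (p q : nat).
Hypothesis hq : 0 < q.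
Hypothesis hp : p <= 3 * q.

Definition col (a : 'I_p) := (a : nat) %/ q.
Definition og : rel 'I_p := fun a b => Kpq_adj p q a b && ((col a).+1 %% 3 == col b).

Lemma col_lt a : col a < 3.
Proof. rewrite /col ltn_divLR //; have := ltn_ord a; lia. Qed.

Lemma col_adj a b : Kpq_adj p q a b -> col a != col b.
Proof.
rewrite /Kpq_adj /ndist /col => /andP[h _]; apply/negP => /eqP E.
move: h; have := divn_eq a q; have := divn_eq b q.
have := ltn_pmod a hq; have := ltn_pmod b hq; rewrite E.
move: (a %% q) (b %% q) (b %/ q * q) => x y z; lia.
Qed.

Lemma og_adj a b : Kpq_adj p q a b -> og a b = ((col a).+1 %% 3 == col b).
Proof. by rewrite /og => ->. Qed.

Lemma og_orient : is_orientation p q og.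
Proof.
split; first by move=> a b /andP[].
move=> a b ab; rewrite /og ab adj_sym ab /=.
by apply: col2; rewrite ?col_lt ?col_adj.
Qed.

Lemma og_good s : ~ alternating_odd_cycle p q og s.
Proof.
case=> [[U sz cy] od alt].
apply: (@key _ s col (mixed_in p og s) U od (leq_trans (isT : 1 < 3) sz) alt).
  move=> x xs; rewrite /mixed_in.
  have a1 := prev_cycle cy xs; have a2 := next_cycle cy xs.
  rewrite (og_adj _ _ a1) (og_adj _ _ a2); rewrite adj_sym in a1; rewrite adj_sym in a2.
  rewrite (og_adj _ _ a1) (og_adj _ _ a2) => H.
  apply: (@col3 (col (prev s x)) (col x) (col (next s x)) (col_lt _) (col_lt _) (col_lt _)).
  - by rewrite eq_sym; apply: col_adj.
  - by rewrite eq_sym; apply: col_adj.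
  - by apply/negP => /andP[h1 h2]; move: H; rewrite h1 h2.
  - by apply/negP => /andP[h1 h2]; move: H; rewrite h1 h2 orbT.
move=> x xs; exact: col_adj (next_cycle cy xs).
Qed.
End Good.

Lemma adj_neq p q (a b : 'I_p) : 0 < q -> Kpq_adj p q a b -> a != b.
Proof.
move=> hq; apply: contraTneq => ->.
by rewrite /Kpq_adj /ndist subnn; case: q hq.
Qed.

Lemma oN p q o (a b : 'I_p) : is_orientation p q o -> Kpq_adj p q a b -> o b a = ~~ o a b.
Proof. by case=> _ H /H; case: (o a b); case: (o b a). Qed.

Lemma oadj p q o (a b : 'I_p) : is_orientation p q o -> o a b || o b a -> Kpq_adj p q a b.
Proof. by case=> H _ /orP[/H //| /H]; rewrite adj_sym. Qed.

Arguments oN {p q o a b}.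
Arguments oadj {p q o a b}.
Arguments adj_neq {p q a b}.

Section Bad.
Variables (n q : nat) (o : rel 'I_n.+1).
Hypothesis hq : 0 < q.
Hypothesis big : 3 * q < n.+1.
Hypothesis Ho : is_orientation n.+1 q o.
Hypothesis Hf : forall a, a <= 2*q -> o (inord a) (inord (a+q)).
Hypothesis Hg : forall a, a < q -> o (inord a) (inord (a+q+1)).

Definition vx i := if odd i then 2*q - i./2 else q - i./2.
Definition X i : 'I_n.+1 := inord (vx i).
Definition cyc := map X (iota 0 (2*q).+1).

Lemma vx_le i : vx i <= 2*q.
Proof. rewrite /vx; case: (odd i); lia. Qed.

Lemma valX i : (X i : nat) = vx i.
Proof. rewrite /X inordK //; have := vx_le i; lia. Qed.

Lemma vx_even j : vx j.*2 = q - j.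
Proof. by rewrite /vx odd_double doubleK. Qed.

Lemma vx_odd j : vx j.*2.+1 = 2*q - j.
Proof. by rewrite /vx /= odd_double /= uphalf_double. Qed.

Lemma vx_inj i j : i <= 2*q -> j <= 2*q -> vx i = vx j -> i = j.
Proof.
rewrite /vx => hi hj; have := odd_double_half i; have := odd_double_half j.
move: (i./2) (j./2) => a b; case: (odd i); case: (odd j); rewrite -!addnn /=; lia.
Qed.

Lemma par i : exists j, i = j.*2 \/ i = j.*2.+1.
Proof.
exists i./2; have := odd_double_half i; case: (odd i) => /= <-; [right|left]; lia.
Qed.

Lemma stepE j : j < q -> o (X j.*2) (X j.*2.+1).
Proof.
move=> jq; rewrite /X vx_even vx_odd.
have -> : 2 * q - j = q - j + q by lia.
apply: Hf; lia.
Qed.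

Lemma stepO j : j < q -> o (X j.*2.+2) (X j.*2.+1).
Proof.
move=> jq; rewrite /X -doubleS vx_even vx_odd.
have -> : 2 * q - j = q - j.+1 + q + 1 by lia.
apply: Hg; lia.
Qed.

Lemma stepL : o (X (2*q)) (X 0).
Proof.
rewrite /X mul2n vx_even subnn.
have -> : vx 0 = 0 + q by rewrite /vx /= subn0.
by apply: Hf.
Qed.

Lemma uniq_cyc : uniq cyc.
Proof.
rewrite map_inj_in_uniq ?iota_uniq // => i j; rewrite !mem_iota /= !add0n => hi hj E.
apply: vx_inj; rewrite -?valX ?E //; lia.
Qed.

Lemma size_cyc : size cyc = (2*q).+1.
Proof. by rewrite size_map size_iota. Qed.

Lemma nthc i : i < (2*q).+1 -> nth (X 0) cyc i = X i.
Proof. by move=> li; rewrite (nth_map 0) ?size_iota // nth_iota. Qed.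

Lemma nextc i : i < 2*q -> next cyc (X i) = X i.+1.
Proof.
move=> li; have li' : i < (2*q).+1 by lia.
rewrite -[X i](@nthc i li').
rewrite nextA ?uniq_cyc ?size_cyc ?nthc //; lia.
Qed.

Lemma nextl : next cyc (X (2*q)) = X 0.
Proof.
rewrite -[X (2*q)](@nthc (2*q)) //.
have -> : 2 * q = (size cyc).-1 by rewrite size_cyc.
by rewrite nextB ?uniq_cyc ?size_cyc // nthc.
Qed.

Lemma prevc i : i < 2*q -> prev cyc (X i.+1) = X i.
Proof. by move=> li; rewrite -nextc // prev_next // uniq_cyc. Qed.

Lemma prev0 : prev cyc (X 0) = X (2*q).
Proof. by rewrite -nextl prev_next // uniq_cyc. Qed.

Lemma flip a b : o a b -> o b a = false.
Proof.
move=> h; have hab : Kpq_adj n.+1 q a b by apply: (oadj Ho); rewrite h.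
by rewrite (oN Ho hab) h.
Qed.

Lemma mixedX i : i <= 2*q -> mixed_in n.+1 o cyc (X i) = (i == 0).
Proof.
rewrite /mixed_in; case: i => [|i] li.
  rewrite prev0 nextc; last lia.
  by rewrite stepL (@stepE 0 hq).
have [j [ej|ej]] := par i; subst i.
  have jq : j < q by lia.
  rewrite prevc ?nextc; try lia.
  by rewrite (@stepE j jq) (@stepO j jq) (flip _ _ (@stepE j jq)) (flip _ _ (@stepO j jq)).
have jq : j < q by lia.
rewrite prevc; last lia.
rewrite (flip _ _ (@stepO j jq)) (@stepO j jq) andFb orFb andbT.
have [jq1|jq1] := ltnP j.+1 q.
  rewrite nextc; last lia.
  have := @stepE j.+1 jq1; rewrite doubleS => h.
  by rewrite (flip _ _ h).
have ej : j.*2.+2 = 2 * q by lia.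
rewrite ej nextl (flip _ _ stepL); apply/esym/eqP; lia.
Qed.

Lemma bad : alternating_odd_cycle n.+1 q o cyc.
Proof.
have hc : is_cycle n.+1 q cyc.
  split; rewrite ?uniq_cyc ?size_cyc //; first lia.
  apply: (cycle_from_next uniq_cyc) => x /mapP [i]; rewrite mem_iota add0n => /andP[_ li] ->.
  apply: (oadj Ho).
  have [li2|li2] := ltnP i (2*q).
    rewrite nextc //; have [j [ej|ej]] := par i; subst i.
      by rewrite stepE //; lia.
    by rewrite (@stepO j) ?orbT //; lia.
  have ei : i = 2*q by lia.
  by rewrite ei nextl stepL.
split=> //; first by rewrite size_cyc /= mul2n odd_double.
rewrite /alternating.
have -> : count (mixed_in n.+1 o cyc) cyc = count (pred1 0) (iota 0 (2*q).+1).
  rewrite {2}/cyc count_map; apply: eq_in_count => i; rewrite mem_iota add0n => /andP[_ li].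
  by rewrite /= mixedX //; lia.
by rewrite count_uniq_mem ?iota_uniq // mem_iota.
Qed.
End Bad.

Section Tri.
Variables (n q : nat) (o : rel 'I_n.+1).
Hypothesis hq : 0 < q.
Hypothesis big : 3 * q < n.+1.
Hypothesis Ho : is_orientation n.+1 q o.
Hypothesis H : forall s, ~ alternating_odd_cycle n.+1 q o s.

Lemma tri a b c : Kpq_adj n.+1 q a b -> Kpq_adj n.+1 q b c -> Kpq_adj n.+1 q c a ->
  o a b = o b c /\ o b c = o c a.
Proof.
move=> ab bc ca.
have nab := adj_neq hq ab; have nbc := adj_neq hq bc; have nca := adj_neq hq ca.
have U : uniq [:: a; b; c].
  by rewrite /= !inE negb_or nab eq_sym nca nbc.
have hc : is_cycle n.+1 q [:: a; b; c] by split; rewrite //= ab bc ca.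
have na : next [:: a; b; c] a = b := @nextA _ [:: a; b; c] a 0 U isT.
have nb : next [:: a; b; c] b = c := @nextA _ [:: a; b; c] a 1 U isT.
have nc : next [:: a; b; c] c = a := @nextB _ [:: a; b; c] a U isT.
have pa : prev [:: a; b; c] a = c by rewrite -[X in prev _ X]nc prev_next.
have pb : prev [:: a; b; c] b = a by rewrite -[X in prev _ X]na prev_next.
have pc : prev [:: a; b; c] c = b by rewrite -[X in prev _ X]nb prev_next.
case Eab: (o a b); case Ebc: (o b c); case Eca: (o c a); try (by split);
  exfalso; apply: (H [:: a; b; c]); split=> //;
  rewrite /alternating /= /mixed_in na nb nc pa pb pc (oN Ho ab) (oN Ho bc) (oN Ho ca) Eab Ebc Eca //.
Qed.

Definition O i j := o (inord i) (inord j).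
Definition okd i j := (q <= ndist i j) && (ndist i j <= n.+1 - q).

Lemma adjN i j : i <= n -> j <= n -> okd i j -> Kpq_adj n.+1 q (inord i) (inord j).
Proof. by move=> hi hj; rewrite /Kpq_adj !inordK. Qed.

Lemma triN i j k : i <= n -> j <= n -> k <= n -> okd i j -> okd j k -> okd k i ->
  O i j = O j k /\ O j k = O k i.
Proof. by move=> *; apply: tri; apply: adjN. Qed.

Definition F a := O a (a + q).
Definition G a := O a (a + q + 1).

Ltac okt := rewrite /okd /ndist; lia.

Lemma FG a : a < q -> [/\ F a = G a, F a = F (a + q) & F (a + q) = F (a + q + 1)].
Proof.
move=> aq.
have [T1 _] := @triN a (a+q) (a+q+q) ltac:(lia) ltac:(lia) ltac:(lia)
  ltac:(okt) ltac:(okt) ltac:(okt).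
have [T2 T2'] := @triN a (a+q) (a+q+q+1) ltac:(lia) ltac:(lia) ltac:(lia)
  ltac:(okt) ltac:(okt) ltac:(okt).
have [T3 T3'] := @triN a (a+q+1) (a+q+1+q) ltac:(lia) ltac:(lia) ltac:(lia)
  ltac:(okt) ltac:(okt) ltac:(okt).
have e : a + q + 1 + q = a + q + q + 1 by lia.
rewrite e in T3 T3'.
rewrite /F /G; split.
- by rewrite T2 T2' T3 T3'.
- exact: T1.
- by rewrite e -T1 T2 T2' -T3'.
Qed.

Lemma Fconst j : j <= q -> F (q + j) = F q.
Proof.
elim: j => [|j IH] lj; first by rewrite addn0.
have [_ _ h] := @FG j ltac:(lia).
rewrite -IH; last lia.
have -> : q + j.+1 = j + q + 1 by lia.
by rewrite -h addnC.
Qed.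

Lemma Fall a : a <= 2 * q -> F a = F q.
Proof.
move=> la; have [aq|aq] := ltnP a q.
  have [_ h _] := @FG a aq; rewrite h addnC Fconst //; lia.
have -> : a = q + (a - q) by lia.
rewrite Fconst //; lia.
Qed.

Lemma Gall a : a < q -> G a = F q.
Proof. move=> aq; have [h _ _] := @FG a aq; rewrite -h Fall //; lia. Qed.
End Tri.

Theorem mainTheorem9 (p q : nat) (hq : 0 < q) (hpq : 2 * q <= p) :
  (exists o : rel 'I_p, is_orientation p q o /\
     forall s : seq 'I_p, ~ alternating_odd_cycle p q o s)
  <-> p <= 3 * q.
Proof.
case: p hpq => [|n] hpq; first lia.
split; last first.
  by move=> hp; exists (og n.+1 q); split; [exact: og_orient | exact: og_good].
move=> [o [Ho H]]; rewrite leqNgt; apply/negP => big.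
have hF := @Fall n q o hq big Ho H; have hG := @Gall n q o hq big Ho H.
case Ee: (F n q o q).
  apply: (H _ (@bad n q o hq big Ho _ _)) => a ha.
    by have := hF a ha; rewrite Ee.
  by have := hG a ha; rewrite Ee.
pose o' : rel 'I_n.+1 := fun x y => o y x.
have Ho' : is_orientation n.+1 q o'.
  case: Ho => H1 H2; split.
    by move=> a b /H1; rewrite adj_sym.
  by move=> a b /H2; rewrite eq_sym.
have hadj : forall a d, a + d <= n -> q <= d -> d <= n.+1 - q ->
    Kpq_adj n.+1 q (inord a) (inord (a + d)).
  move=> a d h1 h2 h3; apply: adjN; rewrite /okd /ndist; lia.
have C := @bad n q o' hq big Ho'.
have [hc od alt] : alternating_odd_cycle n.+1 q o' (cyc n q).
  apply: C => a ha.
    rewrite /o' (oN Ho (hadj a q _ _ _)); try lia.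
    by have := hF a ha; rewrite Ee /F /O => ->.
  rewrite /o' -addnA (oN Ho (hadj a (q + 1) _ _ _)); try lia.
  by have := hG a ha; rewrite Ee /G /O addnA => ->.
apply: (H (cyc n q)); split => //.
move: alt; rewrite /alternating.
have E : mixed_in n.+1 o' (cyc n q) =1 mixed_in n.+1 o (cyc n q).
  by move=> x; rewrite /mixed_in /o' orbC andbC [X in _ || X]andbC.
by rewrite (eq_count E).
Qed.
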